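(* Fix $n\ge2$ and a value $W$ of the fuzzy size. Among all fuzzy graphs $\Gamma$ on $n$ vertices with $\mathrm{ew}(\Gamma)=W$, the ones maximizing $\sigma^*(\Gamma)$ are precisely the fuzzy single-edge graphs: those consisting of one fuzzy edge of membership $W$ and $n-2$ isolated vertices (all other edge memberships zero).
   Context: A fuzzy graph $\Gamma=(V,\nu,\mu)$ consists of a finite vertex set $V$ with $|V|=n$, a map $\nu:V\to[0,1]$, and a symmetric map $\mu:V\times V\to[0,1]$ with $\mu(u,v)\le\min(\nu(u),\nu(v))$. The fuzzy degree is $d_\Gamma(v)=\sum_{u\ne v}\mu(v,u)$, the fuzzy size is $\mathrm{ew}(\Gamma)=\sum_{\{u,v\},u\ne v}\mu(u,v)$, $\lambda=2\,\mathrm{ew}(\Gamma)/n$, and the fuzzy sigma index is $\sigma^*(\Gamma)=\frac1n\sum_{v}(d_\Gamma(v)-\lambda)^2$. *)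

(* Defs.v *)
From HB Require Import structures.
From mathcomp Require Import all_boot all_order all_algebra.
Set Implicit Arguments. Unset Strict Implicit. Unset Printing Implicit Defensive.
Import Order.TTheory GRing.Theory Num.Theory.
Local Open Scope ring_scope.

Section Fuzzy.
Variables (R : realFieldType) (n : nat).

Definition fuzzy_graph (nu : 'I_n -> R) (mu : 'I_n -> 'I_n -> R) : Prop :=
  [/\ forall v, 0 <= nu v <= 1,
      forall u v, 0 <= mu u v <= 1,
      forall u v, mu u v = mu v u &
      forall u v, mu u v <= Num.min (nu u) (nu v)].

Definition fdeg (mu : 'I_n -> 'I_n -> R) (v : 'I_n) : R :=
  \sum_(u < n | u != v) mu v u.

Definition fsize (mu : 'I_n -> 'I_n -> R) : R :=
  \sum_(u < n) \sum_(v < n | (u < v)%N) mu u v.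

Definition flambda (mu : 'I_n -> 'I_n -> R) : R := 2 * fsize mu / n%:R.

Definition fsigma (mu : 'I_n -> 'I_n -> R) : R :=
  n%:R^-1 * \sum_(v < n) (fdeg mu v - flambda mu) ^+ 2.

Definition single_edge (W : R) (mu : 'I_n -> 'I_n -> R) : Prop :=
  exists a b : 'I_n, [/\ a != b, mu a b = W &
    forall u v, u != v -> ~ ((u == a) && (v == b) || (u == b) && (v == a)) ->
      mu u v = 0].

End Fuzzy.

(* Main.v *)
Require Import Defs.
From mathcomp Require Import all_boot all_order all_algebra.
From mathcomp Require Import zify ring lra.
Import Order.TTheory GRing.Theory Num.Theory.
Local Open Scope ring_scope.
Set Implicit Arguments. Unset Strict Implicit.

Section S.
Variables (R : realFieldType) (n : nat) (mu : 'I_n -> 'I_n -> R).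
Hypothesis sym : forall u v, mu u v = mu v u.
Hypothesis nn : forall u v, 0 <= mu u v.

Lemma sumd : \sum_v fdeg mu v = 2 * fsize mu.
Proof.
rewrite /fdeg /fsize.
have E : forall x : 'I_n, \sum_(u | u != x) mu x u =
   \sum_(u : 'I_n | (x < u)%N) mu x u + \sum_(u : 'I_n | (u < x)%N) mu x u.
  move=> x; rewrite (bigID (fun u : 'I_n => (x < u)%N)) /=; congr (_ + _);
  apply: eq_bigl => u; rewrite -(inj_eq val_inj) /=; lia.
rewrite (eq_bigr _ (fun x _ => E x)) big_split /=.
have -> : \sum_(i < n) \sum_(u < n | (u < i)%N) mu i u
   = \sum_(i < n) \sum_(u < n | (i < u)%N) mu i u.
  rewrite (eq_bigr (fun i : 'I_n => \sum_(u : 'I_n) if (u < i)%N then mu i u else 0)); last by move=> i _; rewrite big_mkcond.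
  rewrite exchange_big /=; apply: eq_bigr => u _; rewrite [RHS]big_mkcond; apply: eq_bigr => i _.
  by rewrite sym.
by rewrite -mulr2n mulr_natl.
Qed.

Definition rest v := \sum_(x | x != v) \sum_(y | (y != x) && (y != v)) mu x y.

Lemma restE v : 2 * fsize mu = 2 * fdeg mu v + rest v.
Proof.
rewrite -sumd (bigD1 v) //= /rest.
rewrite (eq_bigr (fun x => mu x v + \sum_(y | (y != x) && (y != v)) mu x y)); last first.
  by move=> x xv; rewrite /fdeg (bigD1 v) //= eq_sym.
rewrite big_split /=.
have -> : \sum_(i < n | i != v) mu i v = fdeg mu v.
  by rewrite /fdeg; apply: eq_bigr => i _; rewrite sym.
by rewrite addrA -mulr2n mulr_natl.
Qed.

Lemma rest_ge0 v : 0 <= rest v.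
Proof. by apply: sumr_ge0 => x _; apply: sumr_ge0. Qed.

Lemma fdeg_ge0 v : 0 <= fdeg mu v.
Proof. by apply: sumr_ge0. Qed.

Lemma fdeg_le v : fdeg mu v <= fsize mu.
Proof. have := restE v; have := rest_ge0 v; lra. Qed.

Lemma sumsq : \sum_v fdeg mu v ^+ 2 =
  2 * fsize mu ^+ 2 - \sum_v fdeg mu v * (fsize mu - fdeg mu v).
Proof.
have -> : \sum_v fdeg mu v * (fsize mu - fdeg mu v) =
   \sum_v fdeg mu v * fsize mu - \sum_v fdeg mu v ^+ 2.
  rewrite -sumrB; apply: eq_bigr => v _; ring.
rewrite -mulr_suml sumd; ring.
Qed.

Lemma sq_expand (l : R) (f : 'I_n -> R) :
  \sum_v (f v - l) ^+ 2 = \sum_v f v ^+ 2 - 2 * l * \sum_v f v + n%:R * l ^+ 2.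
Proof.
rewrite (eq_bigr (fun v => (f v ^+ 2 - 2 * l * f v) + l ^+ 2)); last by move=> v _; ring.
rewrite big_split /= sumrB -mulr_sumr sumr_const card_ord; congr (_ + _); by rewrite mulr_natl.
Qed.

Lemma fsigmaE : (0 < n)%N -> fsigma mu =
  n%:R^-1 * (\sum_v fdeg mu v ^+ 2 - 4 * fsize mu ^+ 2 / n%:R).
Proof.
move=> n0; rewrite /fsigma sq_expand sumd /flambda.
have nz : n%:R != 0 :> R by rewrite pnatr_eq0 -lt0n.
by congr (_ * _); field.
Qed.

Definition Ed := \sum_v fdeg mu v * (fsize mu - fdeg mu v).

Lemma Ed_term_ge0 v : 0 <= fdeg mu v * (fsize mu - fdeg mu v).
Proof. by apply: mulr_ge0; [apply: fdeg_ge0 | rewrite subr_ge0; apply: fdeg_le]. Qed.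

Lemma Ed_ge0 : 0 <= Ed.
Proof. by apply: sumr_ge0 => v _; apply: Ed_term_ge0. Qed.

Lemma fsigmaE2 : (0 < n)%N -> fsigma mu =
  n%:R^-1 * (2 * fsize mu ^+ 2 - Ed - 4 * fsize mu ^+ 2 / n%:R).
Proof. by move=> n0; rewrite fsigmaE // sumsq. Qed.

Lemma fsize_ge0 : 0 <= fsize mu.
Proof. by apply: sumr_ge0 => x _; apply: sumr_ge0. Qed.

Definition pair (a b u v : 'I_n) := (u == a) && (v == b) || (u == b) && (v == a).

Lemma rest0 v x y : rest v = 0 -> x != v -> y != v -> x != y -> mu x y = 0.
Proof.
move=> r0 xv yv xy.
have h := psumr_eq0P (fun x _ => sumr_ge0 _ (fun y _ => nn x y)) r0 xv.
have := psumr_eq0P (fun y _ => nn x y) h.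
by apply; rewrite yv eq_sym xy.
Qed.

Lemma single (a b : 'I_n) : a != b ->
  (forall u v, u != v -> ~ pair a b u v -> mu u v = 0) ->
  fsize mu = mu a b /\ Ed = 0.
Proof.
move=> ab H0.
have ra : rest a = 0.
  apply: big1 => x xa; apply: big1 => y /andP [yx ya]; apply: H0; first by rewrite eq_sym.
  by rewrite /pair (negbTE xa) (negbTE ya) /= andbF.
have rb : rest b = 0.
  apply: big1 => x xb; apply: big1 => y /andP [yx yb]; apply: H0; first by rewrite eq_sym.
  by rewrite /pair (negbTE xb) (negbTE yb) /= andbF.
have da : fdeg mu a = mu a b.
  rewrite /fdeg (bigD1 b) 1?eq_sym //= big1 ?addr0 // => u /andP [ua ub].
  apply: H0; first by rewrite eq_sym.
  by rewrite /pair (negbTE ub) eqxx /= (negbTE ab).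
have db : fdeg mu b = mu a b.
  rewrite sym /fdeg (bigD1 a) //= big1 ?addr0 // => u /andP [ub ua].
  apply: H0; first by rewrite eq_sym.
  by rewrite /pair (negbTE ua) eqxx /= eq_sym (negbTE ab).
have hs : fsize mu = mu a b.
  have := restE a; rewrite ra da; lra.
split => //.
apply: big1 => v _.
case: (eqVneq v a) => [->|va]; first by rewrite da hs subrr mulr0.
case: (eqVneq v b) => [->|vb]; first by rewrite db hs subrr mulr0.
rewrite /fdeg big1 ?mul0r // => u uv; apply: H0; first by rewrite eq_sym.
by rewrite /pair (negbTE va) (negbTE vb).
Qed.

End S.

Theorem corollary3p3 (R : realFieldType) (n : nat) (W : R) :
  (2 <= n)%N -> W <= 1 ->
  forall (nu : 'I_n -> R) (mu : 'I_n -> 'I_n -> R),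
    fuzzy_graph nu mu -> fsize mu = W ->
    ((forall (nu' : 'I_n -> R) (mu' : 'I_n -> 'I_n -> R),
        fuzzy_graph nu' mu' -> fsize mu' = W -> fsigma mu' <= fsigma mu)
     <-> single_edge W mu).
Proof.
move=> n2 W1 nu mu [hnu hmu hsym hmin] hW.
have nn : forall u v, 0 <= mu u v by move=> u v; case/andP: (hmu u v).
have n0 : (0 < n)%N by apply: leq_trans n2.
have ninv : 0 < n%:R^-1 :> R by rewrite invr_gt0 ltr0n.
have cmp : forall (nu' : 'I_n -> R) (mu' : 'I_n -> 'I_n -> R), fuzzy_graph nu' mu' -> fsize mu' = W ->
    (fsigma mu' <= fsigma mu) = (Ed mu <= Ed mu').
  move=> nu' mu' [] _ hmu' hsym' _ hW'.
  have nn' : forall u v, 0 <= mu' u v by move=> u v; case/andP: (hmu' u v).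
  rewrite (fsigmaE2 hsym n0) (fsigmaE2 hsym' n0) ler_pM2l // hW hW'.
  apply/idP/idP; lra.
pose a : 'I_n := Ordinal n0.
pose b : 'I_n := Ordinal n2.
have ab : a != b by [].
split.
- move=> H.
  have W0 : 0 <= W by rewrite -hW; exact: fsize_ge0 nn.
  pose mu' := fun u v => if pair a b u v then W else 0.
  have sym' : forall u v, mu' u v = mu' v u.
    by move=> u v; rewrite /mu' /pair; case: (u == a); case: (u == b); case: (v == a); case: (v == b).
  have nn' : forall u v, 0 <= mu' u v by move=> u v; rewrite /mu'; case: ifP.
  have fg : fuzzy_graph (fun _ => 1) mu'.
    split=> //.
    - by move=> v; rewrite ler01 lexx.
    - by move=> u v; rewrite /mu'; case: ifP => _; rewrite ?lexx ?ler01 ?W0 ?W1.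
    - by move=> u v; rewrite minxx /mu'; case: ifP => _; rewrite ?ler01 ?W1.
  have [fs' E'] : fsize mu' = mu' a b /\ Ed mu' = 0.
    apply: single => // u v uv; rewrite /mu'; case: ifP => //.
  have fs'' : fsize mu' = W by rewrite fs' /mu' /pair !eqxx.
  have := H _ _ fg fs''; rewrite (cmp _ _ fg fs'') E' => Ele.
  have E0 : Ed mu = 0 by apply/eqP; rewrite eq_le Ele Ed_ge0.
  have Et := psumr_eq0P (fun v _ => Ed_term_ge0 hsym nn v) E0.
  case: (boolP [exists x, exists y, (x != y) && (mu x y != 0)]).
  + case/existsP => x /existsP [y /andP [xy mxy]].
    have pos : 0 < mu x y by rewrite lt_def mxy nn.
    have degW : forall p q, p != q -> 0 < mu p q -> rest mu p = 0.
      move=> p q pq mpq.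
      have dp : mu p q <= fdeg mu p.
        rewrite /fdeg (bigD1 q) 1?eq_sym //= lerDl.
        by apply: sumr_ge0.
      have := Et p isT; move/eqP; rewrite mulf_eq0 => /orP [/eqP d0|].
        by move: dp mpq; rewrite d0; lra.
      rewrite subr_eq0 => /eqP hp.
      have := restE hsym p; rewrite -hp; lra.
    have rx := degW x y xy pos.
    have ry : rest mu y = 0 by apply: (degW y x); [rewrite eq_sym | rewrite hsym].
    have H0 : forall u v, u != v -> ~ pair x y u v -> mu u v = 0.
      move=> u v uv np.
      case: (eqVneq u x) => [eux|ux].
        have vy : v != y by apply/negP => /eqP evy; apply: np; rewrite /pair eux evy !eqxx.
        apply: (rest0 nn ry) => //; rewrite ?eux // eq_sym //.
      case: (eqVneq v x) => [evx|vx]; last by apply: (rest0 nn rx).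
      have uy : u != y by apply/negP => /eqP euy; apply: np; rewrite /pair evx euy !eqxx orbT.
      by apply: (rest0 nn ry) => //; rewrite evx.
    have [fs _] := single hsym xy H0.
    by exists x, y; split => //; rewrite -fs.
  + rewrite negb_exists => /forallP hall.
    have H0 : forall u v, u != v -> ~ pair a b u v -> mu u v = 0.
      move=> u v uv _; have := hall u; rewrite negb_exists => /forallP /(_ v).
      by rewrite negb_and uv /= negbK => /eqP.
    have [fs _] := single hsym ab H0.
    by exists a, b; split => //; rewrite -fs.
- case=> x [y [xy mxy H0]].
  have [_ E0] := single hsym xy H0.
  move=> nu' mu' fg hW'; rewrite (cmp _ _ fg hW') E0.
  case: fg => _ hmu' hsym' _.
  apply: Ed_ge0 => // u v; by case/andP: (hmu' u v).
Qed.
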